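(* Let $p$ be an odd prime. For $1\le k\le p$ let $\nu_k:=2\cos\left(\frac{(2k-1)\pi}{2p}\right)$ (so $\nu_{(p+1)/2}=0$). For $i\ge 0$ let $R_i(x):=2T_i(x/2)\in\mathbb{Z}[x]$. Let $Q_{4p}$ be the $p\times p$ matrix obtained from $\big(R_i(\nu_k)\big)_{1\le k\le p,\ 0\le i\le p-1}$ (row index $k$, column index $i$) by interchanging its first row and its $\frac{p+1}{2}$-th row; write $\theta_1,\dots,\theta_{p-1}$ for the nodes $\nu_k$ corresponding, in order, to rows $2,\dots,p$ of $Q_{4p}$ (so its first row is $(R_0(0),R_1(0),\dots,R_{p-1}(0))$). Let $F$ be the $p\times p$ matrix with $1$ on the diagonal, $-1$ in positions $(j,1)$ for $2\le j\le p$, and $0$ elsewhere, and let $$C=\begin{pmatrix}1 & \mathbf{r}\\ \mathbf{0} & I_{p-1}\end{pmatrix},\qquad \mathbf{r}=(r_1,\dots,r_{p-1})=(0,1,0,-1,0,1,0,-1,\dots),$$ i.e. $r_i=0$ for $i$ odd, $r_i=1$ for $i\equiv2\pmod4$, $r_i=-1$ for $i\equiv0\pmod4$. Then $$FQ_{4p}C=\begin{pmatrix}2 & \mathbf{0}^t\\ \mathbf{0} & N_{4p}\end{pmatrix},\qquad N_{4p}=\big(R_i^*(\theta_j)\big)_{1\le j\le p-1,\ 1\le i\le p-1},$$ where for each $i\in\{1,\dots,p-1\}$, $R_i^*(x)\in\mathbb{Z}[x]$ is monic of degree $i$ with zero constant term. In particular $N_{4p}$ is invertible and $\mathrm{Cond}(N_{4p})\le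 p(p+1)(2p-1)^2$.
   Context: $T_i$ is the Tchebycheff polynomial of the first kind ($T_0=1$, $T_1=x$, $T_i=2xT_{i-1}-T_{i-2}$). For an invertible complex matrix $A$, $\|A\|=\sqrt{\mathrm{Tr}(AA^* )}$ is the Frobenius norm and $\mathrm{Cond}(A)=\|A\|\,\|A^{-1}\|$. The nodes $\theta_1,\dots,\theta_{p-1}$ are exactly the Galois conjugates of $2\cos(\pi/(2p))$, a primitive element of the maximal totally real subfield of the $4p$-th cyclotomic field. *)

(* Defs.v *)
From HB Require Import structures.
From mathcomp Require Import all_boot all_order all_algebra perm.
From mathcomp Require Import reals trigo.
Set Implicit Arguments. Unset Strict Implicit. Unset Printing Implicit Defensive.
Import Order.TTheory GRing.Theory Num.Theory.
Local Open Scope ring_scope.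

Section Defs.
Variable R : realType.

Fixpoint chebT (i : nat) : {poly R} :=
  match i with
  | 0%N => 1
  | 1%N => 'X
  | (S ((S m) as k)) => 'X *+ 2 * chebT k - chebT m
  end.

Definition Rcheb (i : nat) (x : R) : R := 2 * (chebT i).[x / 2].

(* Throughout p = n.+1.  Node nu_{k+1} (paper's 1-based k+1, k : 'I_p):
   2 cos ((2(k+1)-1) pi / (2p)). *)
Definition nu (n : nat) (k : 'I_n.+1) : R :=
  2 * cos (((2 * k + 1)%:R * pi) / (2 * n.+1)%:R).

Definition Qraw (n : nat) : 'M[R]_n.+1 := \matrix_(k, i) Rcheb i (nu k).

(* index (p+1)/2 (1-based) = n./2 (0-based) *)
Definition midx (n : nat) : 'I_n.+1 := inord n./2.

Definition Q4p (n : nat) : 'M[R]_n.+1 := xrow ord0 (midx n) (Qraw n).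

(* theta_j (j : 'I_n, paper's j+1): the node of row j+2 of Q_{4p} *)
Definition theta (n : nat) (j : 'I_n) : R :=
  nu (tperm ord0 (midx n) (lift ord0 j)).

Definition Fmx (n : nat) : 'M[R]_n.+1 :=
  \matrix_(i, j) if i == j then 1
                 else if (j == ord0) && (i != ord0) then -1 else 0.

Definition rcoef (i : nat) : R :=
  if odd i then 0 else if (i %% 4 == 2)%N then 1 else -1.

Definition Cmx (n : nat) : 'M[R]_n.+1 :=
  \matrix_(i, j) if i == j then 1
                 else if i == ord0 then rcoef j else 0.

(* Frobenius norm sqrt(Tr(A A^star)); for real matrices A^star = A^T *)
Definition frob (m : nat) (A : 'M[R]_m) : R := Num.sqrt (\tr (A *m A^T)).

Definition Cond (m : nat) (A : 'M[R]_m) : R := frob A * frob (invmx A).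

End Defs.

(* Main.v *)
Require Import Defs.
From HB Require Import structures.
From mathcomp Require Import all_boot all_order all_algebra perm.
From mathcomp Require Import reals trigo.
From mathcomp Require Import ring lra zify.
Import Order.TTheory GRing.Theory Num.Theory.
Local Open Scope ring_scope.

Module Helpers.
Set Implicit Arguments. Unset Strict Implicit. Unset Printing Implicit Defensive.


Section Trig.
Variable R : realType.

Lemma cos_rec (a x : R) : cos (a + x) = cos x * 2 * cos a - cos (a - x).
Proof. rewrite cosD cosB; ring. Qed.

Lemma cheb_cos i (x : R) : (chebT R i).[cos x] = cos (i%:R * x).
Proof.
suff: (chebT R i).[cos x] = cos (i%:R * x) /\ (chebT R i.+1).[cos x] = cos (i.+1%:R * x) by case.
elim: i => [|i [IH1 IH2]]; first by rewrite /= hornerX hornerC mul0r cos0 mul1r.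
split => //.
rewrite /= hornerD hornerN !hornerM hornerMn hornerX -/(chebT R i.+1) IH1 IH2.
rewrite (_ : i.+2%:R * x = i.+1%:R * x + x); last by rewrite -addn1 natrD; ring.
rewrite cos_rec (_ : i.+1%:R * x - x = i%:R * x); last by rewrite -addn1 natrD; ring.
ring.
Qed.

Lemma sin_natpi m : sin (m%:R * pi) = 0 :> R.
Proof. by have := alternatingn (@sinDpi R) m 0; rewrite add0r sin0 mulr0 mulr_natl. Qed.

Lemma sum_cos (p m : nat) : (0 < m < 2 * p)%N ->
  \sum_(k < p) cos (m%:R * (((2 * k + 1)%:R * pi) / (2 * p)%:R)) = 0 :> R.
Proof.
move=> /andP[m0 mp].
have p0 : (0 < p)%N by rewrite lt0n; apply/eqP => p0; move: mp; rewrite p0.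
set b : R := m%:R * pi / (2 * p)%:R.
have hb : 0 < sin b.
  apply: sin_gt0_pi; apply/andP; split.
    by rewrite /b divr_gt0 // ?mulr_gt0 ?pi_gt0 ?ltr0n // muln_gt0.
  rewrite /b ltr_pdivrMr ?ltr0n ?muln_gt0 // mulrC ltr_pM2l ?pi_gt0 //.
  by rewrite ltr_nat.
have key : forall k : nat, 2 * sin b * cos (m%:R * (((2 * k + 1)%:R * pi) / (2 * p)%:R))
   = sin ((2 * k.+1)%:R * b) - sin ((2 * k)%:R * b).
  move=> k.
  rewrite (_ : (2 * k.+1)%:R * b = (2 * k + 1)%:R * b + b); last first.
    by rewrite !natrM !natrD; ring.
  rewrite (_ : (2 * k)%:R * b = (2 * k + 1)%:R * b - b); last first.
    by rewrite !natrM !natrD; ring.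
  rewrite sinD sinB.
  rewrite (_ : m%:R * (((2 * k + 1)%:R * pi) / (2 * p)%:R) = (2 * k + 1)%:R * b); first ring.
  by rewrite /b; ring.
apply: (@mulfI _ (2 * sin b)); first by rewrite mulf_neq0 ?gt_eqF.
rewrite mulr0 mulr_sumr.
rewrite (eq_bigr (fun k : 'I_p => sin ((2 * k.+1)%:R * b) - sin ((2 * k)%:R * b))); last by move=> k _; rewrite key.
rewrite -(big_mkord xpredT (fun k => sin ((2 * k.+1)%:R * b) - sin ((2 * k)%:R * b))) .
rewrite (telescope_sumr (fun k => sin ((2 * k)%:R * b))) //.
rewrite muln0 mul0r sin0 subr0.
rewrite (_ : (2 * p)%:R * b = m%:R * pi); first by rewrite sin_natpi.
by rewrite /b mulrC divfK // pnatr_eq0 muln_eq0 negb_or /= -lt0n p0.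

Qed.


Definition phi (n : nat) (k : nat) : R := ((2 * k + 1)%:R * pi) / (2 * n.+1)%:R.

Lemma Rcheb_nu n i (k : 'I_n.+1) : Rcheb i (nu R k) = 2 * cos (i%:R * phi n k).
Proof.
rewrite /Rcheb /nu -cheb_cos /phi; congr (_ * (chebT R i).[_]).
by rewrite mulrC mulrA mulVf ?mul1r // pnatr_eq0.
Qed.

Definition dist (i j : nat) := if (i <= j)%N then (j - i)%N else (i - j)%N.

Lemma prod_cos i j (x : R) :
  2 * cos (i%:R * x) * (2 * cos (j%:R * x)) =
  2 * cos ((i + j)%:R * x) + 2 * cos ((dist i j)%:R * x).
Proof.
rewrite /dist natrD (mulrDl i%:R) cosD; case: leqP => h.
  rewrite natrB // mulrBl cosB.
  move: (cos _) (cos _) (sin _) (sin _) => a b c d; ring.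
rewrite natrB; last exact: ltnW.
rewrite mulrBl cosB.
move: (cos _) (cos _) (sin _) (sin _) => a b c d; ring.
Qed.

Lemma sum_cos0 p : \sum_(k < p) cos (0%:R * phi p.-1 k) = p%:R :> R.
Proof.
under eq_bigr do rewrite mul0r cos0.
by rewrite sumr_const card_ord.
Qed.

Lemma orth n i j : (i <= n)%N -> (j <= n)%N ->
  \sum_(k < n.+1) Rcheb i (nu R k) * Rcheb j (nu R k) =
  if i == j then (if i == 0%N then 4 else 2) * n.+1%:R else 0.
Proof.
move=> hi hj.
under eq_bigr do rewrite !Rcheb_nu prod_cos.
rewrite big_split /= -!mulr_sumr.
have S : forall m, (0 < m < 2 * n.+1)%N -> \sum_(k < n.+1) cos (m%:R * phi n k) = 0.
  by move=> m hm; rewrite /phi sum_cos.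
have hd : (dist i j < 2 * n.+1)%N by rewrite /dist; case: (leqP i j) => _; lia.
have hs : (i + j < 2 * n.+1)%N by lia.
case: ifP => [/eqP <-|/negbT ij]; last have ij2 : ((i < j)%N || (j < i)%N) by rewrite -neq_ltn.
  rewrite /dist leqnn subnn sum_cos0.
  case: eqP => [->|i0].
    by rewrite sum_cos0; ring.
  rewrite S; last by apply/andP; split => //; lia.
  ring.
rewrite (S (dist i j)); last first.
  apply/andP; split => //; rewrite /dist; case: (leqP i j) => h; clear -ij2 h; lia.
rewrite (S (i + j)); last by apply/andP; split => //; lia.
ring.
Qed.
End Trig.
Fixpoint Pint (i : nat) : {poly int} :=
  match i with
  | 0%N => 2%:P
  | 1%N => 'X
  | (S ((S m) as k)) => Pint k * 'X - Pint m
  end.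

Lemma Pint_size i : size (Pint i) = i.+1 /\ ((0 < i)%N -> Pint i \is monic).
Proof.
suff: (size (Pint i) = i.+1 /\ ((0 < i)%N -> Pint i \is monic)) /\
      (size (Pint i.+1) = i.+2 /\ Pint i.+1 \is monic) by case.
elim: i => [|i [[s1 m1] [s2 m2]]].
  by rewrite /= size_polyC size_polyX monicX.
split; first by split.
have hs : (size (- Pint i) < size (Pint i.+1 * 'X)%R)%N.
  by rewrite size_polyN size_mulX ?s1 ?s2 // -size_poly_gt0 s2.
rewrite /= -/(Pint i.+1) size_polyDl // size_mulX ?s2 //; last by rewrite -size_poly_gt0 s2.
split => //; rewrite monicE lead_coefDl // lead_coefMX; exact: m2.
Qed.

Definition Rstar (i : nat) : {poly int} := Pint i - ((Pint i)`_0)%:P.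

Lemma Rstar_prop i : (1 <= i)%N ->
  [/\ Rstar i \is monic, size (Rstar i) = i.+1 & (Rstar i)`_0 = 0].
Proof.
move=> hi; have [s m] := Pint_size i.
have hs : (size (- ((Pint i)`_0)%:P) < size (Pint i))%N.
  by rewrite size_polyN s (leq_ltn_trans (size_polyC_leq1 _)).
split.
- by rewrite /Rstar monicE lead_coefDl // (eqP (m hi)).
- by rewrite /Rstar size_polyDl.
- by rewrite /Rstar coefB coefC subrr.
Qed.

Section Ev.
Variable R : realType.

Lemma Pint_eval i (x : R) : (map_poly (fun z : int => z%:~R) (Pint i)).[x] = Rcheb i x.
Proof.
suff: (map_poly (fun z : int => z%:~R) (Pint i)).[x] = Rcheb i x /\
      (map_poly (fun z : int => z%:~R) (Pint i.+1)).[x] = Rcheb i.+1 x by case.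
elim: i => [|i [IH1 IH2]].
  rewrite /Rcheb /= map_polyC map_polyX hornerC hornerX hornerC.
  split; last by rewrite hornerX; field.
  by rewrite mulr1.
split => //.
rewrite /= -/(Pint i.+1) rmorphB rmorphM /= map_polyX hornerD hornerN hornerMX IH1 IH2.
rewrite /Rcheb /= hornerD hornerN !hornerM hornerMn hornerX -/(chebT R i.+1).
by field.
Qed.

Lemma Rstar_eval i (x : R) :
  (map_poly (fun z : int => z%:~R) (Rstar i)).[x] = Rcheb i x - Rcheb i 0.
Proof.
rewrite /Rstar rmorphB /= map_polyC hornerD hornerN hornerC -!Pint_eval /=.
by rewrite horner_coef0 coef_map.
Qed.
End Ev.


Section Mx.
Variable R : realType.

Lemma rcoefSS j : rcoef R j.+2 = - rcoef R j.
Proof.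
rewrite /rcoef /= negbK; case: ifP => hj; first by rewrite oppr0.
have h2 : (j %% 2 = 0)%N by rewrite modn2 hj.
case E1: (j %% 4 == 2)%N; case E2: (j.+2 %% 4 == 2)%N => //.
- move/eqP: E1 => E1; move/eqP: E2 => E2; lia.
- by rewrite opprK.
- move/negbT/eqP: E1 => E1; move/negbT/eqP: E2 => E2; lia.
Qed.

Lemma cheb0 j : (chebT R j).[0] = - rcoef R j.
Proof.
suff: (chebT R j).[0] = - rcoef R j /\ (chebT R j.+1).[0] = - rcoef R j.+1 by case.
elim: j => [|j [IH1 IH2]].
  by rewrite /= hornerC hornerX /rcoef /= opprK oppr0.
split => //.
rewrite /= hornerD hornerN hornerM -/(chebT R j.+1) IH1 rcoefSS hornerMn hornerX.
by rewrite mul0rn mul0r add0r.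
Qed.

Lemma Rcheb_at0 j : Rcheb j (0 : R) = - 2 * rcoef R j.
Proof. by rewrite /Rcheb mul0r cheb0 mulrN mulNr. Qed.

Lemma Rcheb0 x : Rcheb 0 x = 2 :> R.
Proof. by rewrite /Rcheb /= hornerC mulr1. Qed.

Variable n : nat.
Hypothesis oddp : odd n.+1.

Lemma nu_mid : nu R (midx n) = 0.
Proof.
rewrite /nu /midx inordK; last by rewrite ltnS leq_half_double -addnn; lia.
have e : (2 * n./2 + 1 = n.+1)%N.
  move: oddp => /= /negbTE on; have := odd_double_half n; rewrite on /= -addnn; lia.
rewrite e (_ : (n.+1%:R * pi) / (2 * n.+1)%:R = pi / 2) ?cos_pihalf ?mulr0 //.
rewrite natrM; field; by rewrite nat1r pnatr_eq0.
Qed.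

Lemma Q4p_E (k i : 'I_n.+1) : Q4p R n k i = Rcheb i (nu R (tperm ord0 (midx n) k)).
Proof. by rewrite /Q4p xrowEsub !mxE. Qed.


Definition Gm : 'M[R]_n.+1 := \matrix_(k, l) ((k != ord0) && (l == ord0))%:R.
Definition Em : 'M[R]_n.+1 := \matrix_(l, j) (((l == ord0) && (j != ord0))%:R * rcoef R j).

Lemma Fmx_eq : Fmx R n = 1%:M - Gm.
Proof.
apply/matrixP => i j; rewrite !mxE.
case: (eqVneq i j) => [<-|ij] /=.
  by case: (eqVneq i ord0) => _ /=; rewrite subr0.
rewrite add0r; case: (eqVneq j ord0) => _ /=;
  by case: (i != ord0); rewrite /= ?mulr1n ?mulr0n ?oppr0.
Qed.

Lemma Cmx_eq : Cmx R n = 1%:M + Em.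
Proof.
apply/matrixP => i j; rewrite !mxE.
case: (eqVneq i j) => [<-|ij] /=.
  by case: (eqVneq i ord0) => _ /=; rewrite mul0r addr0.
rewrite add0r; case: (eqVneq i ord0) => [e|_] /=; last by rewrite mul0r.
by rewrite -e eq_sym ij mul1r.
Qed.

Lemma GG : Gm *m Gm = 0.
Proof.
apply/matrixP => i j; rewrite !mxE; apply: big1 => l _; rewrite !mxE.
by case: (eqVneq l ord0) => _; rewrite /= ?andbF ?mulr0 ?mul0r.
Qed.

Lemma EE : Em *m Em = 0.
Proof.
apply/matrixP => i j; rewrite !mxE; apply: big1 => l _; rewrite !mxE.
by case: (eqVneq l ord0) => _; rewrite /= ?andbF ?mulr0n ?mul0r ?mulr0.
Qed.

Lemma my_inv_pair (A : 'M[R]_n.+1) : A *m A = 0 ->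
  (1%:M + A) *m (1%:M - A) = 1%:M /\ (1%:M - A) *m (1%:M + A) = 1%:M.
Proof.
move=> AA; split.
  by rewrite mulmxDl mul1mx mulmxBr mulmx1 AA subr0 subrK.
by rewrite mulmxBl mul1mx mulmxDr mulmx1 AA addr0 addrK.
Qed.

Definition dd (i : 'I_n.+1) : R := (if (i : nat) == 0%N then 4 else 2) * n.+1%:R.

Definition Zm : 'M[R]_n.+1 := \matrix_(i, j) (Q4p R n j i / dd i).

Lemma ZQ : Zm *m Q4p R n = 1%:M.
Proof.
apply/matrixP => i j; rewrite !mxE.
under eq_bigr do rewrite !mxE mulrAC.
rewrite -mulr_suml.

rewrite (reindex_inj (@perm_inj _ (tperm ord0 (midx n)))) /=.
under eq_bigr do rewrite tpermK.
rewrite orth; [|by rewrite -ltnS|by rewrite -ltnS].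
have dd0 : dd i != 0 by rewrite /dd mulf_neq0 ?pnatr_eq0 //; case: ifP => _; rewrite pnatr_eq0.
case: (eqVneq i j) => [<-|ij]; first by rewrite eqxx -/(dd i) mulfV.
have : (i : nat) != j by [].
by move/negbTE => ->; rewrite mul0r.
Qed.

Lemma FA (A : 'M[R]_n.+1) k i :
  ((1%:M - Gm) *m A) k i = A k i - (k != ord0)%:R * A ord0 i.
Proof.
rewrite mulmxBl mul1mx !mxE (bigD1 ord0) //= big1 ?addr0; last first.
  by move=> l /negbTE hl; rewrite !mxE hl andbF mulr0n mul0r.
by rewrite !mxE eqxx andbT.
Qed.

Lemma AE (A : 'M[R]_n.+1) k j :
  (A *m (1%:M + Em)) k j = A k j + (j != ord0)%:R * rcoef R j * A k ord0.
Proof.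
rewrite mulmxDr mulmx1 !mxE (bigD1 ord0) //= big1 ?addr0; last first.
  by move=> l /negbTE hl; rewrite !mxE hl /= mul0r mulr0.
by rewrite !mxE eqxx /= mulrC.
Qed.

Lemma M_entry k j :
  ((1%:M - Gm) *m Q4p R n *m (1%:M + Em)) k j =
  if k == ord0 then (if j == ord0 then 2 else 0)
  else (if j == ord0 then 0 else Rcheb j (nu R (tperm ord0 (midx n) k)) - Rcheb j 0).
Proof.
rewrite AE !FA !Q4p_E tpermL nu_mid.
case: (eqVneq k ord0) => [->|_]; case: (eqVneq j ord0) => [->|_] /=;
  rewrite ?tpermL ?nu_mid ?Rcheb0 ?Rcheb_at0 ?mulr1n ?mulr0n ?mul1r ?mul0r ?subr0 ?addr0 //;
  rewrite ?subrr ?mulr0 ?addr0 //; ring.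
Qed.

Definition Nm : 'M[R]_n :=
  \matrix_(j, i) (map_poly (fun z : int => z%:~R) (Rstar i.+1)).[theta R j].

Lemma Mblock : (Fmx R n *m Q4p R n *m Cmx R n : 'M_(1 + n)) =
   block_mx (2%:M : 'M[R]_1) 0 0 Nm.
Proof.
rewrite Fmx_eq Cmx_eq; apply/matrixP => k j.
have -> : k = unsplit (split (k : 'I_(1 + n))) by rewrite splitK.
have -> : j = unsplit (split (j : 'I_(1 + n))) by rewrite splitK. case: (split k) => k'; case: (split j) => j' /=.
- rewrite block_mxEul M_entry.
  have -> : lshift n k' = ord0 by apply: val_inj; rewrite /= ord1.
  have -> : lshift n j' = ord0 by apply: val_inj; rewrite /= ord1.
  by rewrite eqxx !mxE !ord1 eqxx.
- rewrite block_mxEur M_entry mxE.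
  have -> : lshift n k' = ord0 by apply: val_inj; rewrite /= ord1.
  by rewrite eqxx.
- rewrite block_mxEdl M_entry mxE.
  have -> : lshift n j' = ord0 by apply: val_inj; rewrite /= ord1.
  rewrite eqxx; have -> : (rshift 1 k' == ord0 :> 'I_n.+1) = false by [].
  by [].
- rewrite (block_mxEdr (2%:M : 'M[R]_1)) M_entry !mxE Rstar_eval /theta.
  have -> : rshift 1 k' = lift ord0 k' by apply: val_inj.
  have -> : (rshift 1 j' : 'I_n.+1) = lift ord0 j' by apply: val_inj.
  by [].
Qed.
End Mx.

Section Bounds.
Variable R : realType.

Lemma mul_bound m1 m2 m3 (A : 'M[R]_(m1,m2)) (B : 'M[R]_(m2,m3)) (a b : R) :
  (forall i j, `|A i j| <= a) -> (forall i j, `|B i j| <= b) ->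
  forall i j, `|(A *m B) i j| <= m2%:R * (a * b).
Proof.
move=> hA hB i j; rewrite mxE; apply: le_trans (ler_norm_sum _ _ _) _.
apply: le_trans (_ : _ <= \sum_(l < m2) (a * b)) _; last first.
  by rewrite sumr_const card_ord mulr_natl.
by apply: ler_sum => l _; rewrite normrM; apply: ler_pM.
Qed.

Lemma frob_bound m (A : 'M[R]_m) (c : R) : 0 <= c -> (forall i j, `|A i j| <= c) ->
  frob A <= m%:R * c.
Proof.
move=> c0 hA; rewrite /frob.
have -> : m%:R * c = Num.sqrt ((m%:R * c) ^+ 2).
  by rewrite sqrtr_sqr ger0_norm // mulr_ge0.
apply: ler_wsqrtr.
rewrite /mxtrace.
have -> : (m%:R * c) ^+ 2 = \sum_(i < m) \sum_(j < m) (c * c).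
  rewrite !sumr_const card_ord -mulrnA -[in RHS]mulr_natl natrM; move: (m%:R : R) => x; ring.
apply: ler_sum => i _; rewrite mxE; apply: ler_sum => j _; rewrite mxE.
apply: le_trans (ler_norm _) _; rewrite normrM; apply: ler_pM => //.
Qed.

Lemma norm_bool (b : bool) : `|b%:R : R| <= 1.
Proof. by case: b; rewrite ?normr1 ?normr0. Qed.

Lemma norm_rcoef j : `|rcoef R j| <= 1.
Proof. by rewrite /rcoef; case: ifP; rewrite ?normr0 //; case: ifP; rewrite ?normrN normr1. Qed.

Lemma norm_1pm m (X : 'M[R]_m) : (forall i j, `|X i j| <= 1) ->
  (forall i j, `|(1%:M + X) i j| <= 2) /\ (forall i j, `|(1%:M - X) i j| <= 2).
Proof.
move=> hX; split=> i j; rewrite !mxE.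
  apply: le_trans (ler_normD _ _) _; rewrite (_ : 2 = 1 + 1) //; apply: lerD => //.
  exact: norm_bool.
apply: le_trans (ler_normB _ _) _; rewrite (_ : 2 = 1 + 1) //; apply: lerD => //.
exact: norm_bool.
Qed.

End Bounds.



Section Final.
Variable R : realType.
Variable n : nat.
Hypothesis oddp : odd n.+1.

Let p : R := n.+1%:R.
Lemma p_gt0 : 0 < p. Proof. by rewrite /p ltr0n. Qed.

Lemma normQ k i : `|Q4p R n k i| <= 2.
Proof.
rewrite Q4p_E Rcheb_nu normrM normr_nat -[X in _ <= X]mulr1.
by apply: ler_wpM2l => //; exact: cos_max.
Qed.

Lemma normZ i j : `|Zm R n i j| <= p^-1.
Proof.
have hp := p_gt0.
have hd : 2 * p <= dd R i by rewrite /dd -/p; case: ifP => _; lra.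
rewrite [Zm R n i j]mxE normrM normfV (ger0_norm (le_trans _ hd)); last lra.
apply: (@le_trans _ _ (2 * (2 * p)^-1)).
  apply: ler_pM => //.
  - by rewrite invr_ge0; lra.
  - exact: normQ.
  - rewrite (@lef_pV2 R) ?posrE //; lra.
rewrite (_ : 2 * (2 * p)^-1 = p^-1) //; field; lra.
Qed.

Lemma normE i j : `|Em R n i j| <= 1.
Proof.
rewrite mxE normrM -[X in _ <= X]mulr1; apply: ler_pM => //.
  exact: norm_bool.
exact: norm_rcoef.
Qed.

Lemma normG i j : `|Gm R n i j| <= 1.
Proof. rewrite mxE; exact: norm_bool. Qed.

Definition Ym := (1%:M - Em R n) *m Zm R n *m (1%:M + Gm R n).

Lemma normY i j : `|Ym i j| <= 4 * p.
Proof.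
have hp := p_gt0.
have h1 : forall i j, `|((1%:M - Em R n) *m Zm R n) i j| <= 2.
  move=> i' j'; apply: le_trans (mul_bound (proj2 (norm_1pm normE)) normZ i' j') _.
  rewrite -/p (_ : p * (2 * p^-1) = 2) //; field; lra.
apply: le_trans (mul_bound h1 (proj1 (norm_1pm normG)) i j) _.
rewrite -/p; lra.
Qed.

Lemma YM : Ym *m (Fmx R n *m Q4p R n *m Cmx R n) = 1%:M.
Proof.
rewrite Fmx_eq Cmx_eq /Ym !mulmxA.
rewrite -(mulmxA _ (1%:M + Gm R n)) (proj1 (my_inv_pair (GG R n))) mulmx1.
rewrite -(mulmxA _ (Zm R n)) ZQ mulmx1.
by rewrite (proj2 (my_inv_pair (EE R n))).
Qed.

Lemma normN j i : `|Nm R n j i| <= 4.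
Proof.
rewrite mxE Rstar_eval /theta Rcheb_nu -(nu_mid R oddp) Rcheb_nu.
apply: le_trans (ler_normB _ _) _; rewrite !normrM normr_nat.
have := cos_max (i.+1%:R * phi R n (tperm ord0 (midx n) (lift ord0 j))).
have := cos_max (i.+1%:R * phi R n (midx n)).
lra.
Qed.

End Final.

End Helpers.
Import Helpers.

Theorem mainTheorem6 (R : realType) (n : nat) :
  prime n.+1 -> odd n.+1 ->
  exists (N : 'M[R]_n) (Rstar : nat -> {poly int}),
    [/\ forall i : nat, (1 <= i <= n)%N ->
          [/\ Rstar i \is monic, size (Rstar i) = i.+1 & (Rstar i)`_0 = 0],
        (forall (j i : 'I_n),
          N j i = (map_poly (fun z : int => z%:~R) (Rstar i.+1)).[theta R j]),
        Fmx R n *m Q4p R n *m Cmx R n = block_mx (2%:M : 'M[R]_1) 0 0 N,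
        N \in unitmx
      & Cond N <= (n.+1 * n.+2 * (2 * n.+1 - 1) ^ 2)%:R].
Proof.
move=> _ oddp.
have MB := Mblock R oddp.
have YM1 : (Ym R n : 'M_(1 + n)) *m block_mx (2%:M : 'M[R]_1) 0 0 (Nm R n) = 1%:M.
  rewrite -MB; exact: YM.
rewrite -(submxK (Ym R n : 'M_(1 + n))) mulmx_block (scalar_mx_block 1 n 1) in YM1.
case/eq_block_mx: YM1 => _ _ _.
rewrite mulmx0 add0r => H.
have [_ Nu] := mulmx1_unit H.
have invN : invmx (Nm R n) = drsubmx (Ym R n : 'M_(1 + n)).
  by rewrite -[invmx _]mul1mx -H -mulmxA mulmxV // mulmx1.
exists (Nm R n), Rstar; split => //.
- by move=> i /andP[hi _]; apply: Rstar_prop.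
- by move=> j i; rewrite mxE.
rewrite /Cond invN.
have hp : 0 < n.+1%:R :> R by rewrite ltr0n.
have f1 : frob (Nm R n) <= n%:R * 4 by apply: frob_bound => //; exact: normN.
have f2 : frob (drsubmx (Ym R n : 'M_(1 + n))) <= n%:R * (4 * n.+1%:R).
  apply: frob_bound; first lra.
  by move=> i j; rewrite mxE [dsubmx _ _ _]mxE; exact: normY.
apply: le_trans (ler_pM (sqrtr_ge0 _) (sqrtr_ge0 _) f1 f2) _.
have hn : (n * 4 * (n * (4 * n.+1)) <= n.+1 * n.+2 * (2 * n.+1 - 1) ^ 2)%N by nia.
rewrite -(ler_nat R) in hn; apply: (le_trans _ hn); by rewrite !natrM.
Qed.
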